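(* For every $d\ge 1$, $\mu_t(\mathit{BF}(d))=2^d$.
   Context: Binary strings $c=c_0\cdots c_{d-1}$ have positions $0,\dots,d-1$ from the left; $c(i)$ is $c$ with bit $i$ complemented. $\mathit{BF}(d)$ has vertex set $\{[\ell,c]:\ell\in\{0,\dots,d\},\ c\in\{0,1\}^d\}$; for $\ell\in\{0,\dots,d-1\}$, $[\ell,c]$ is adjacent to $[\ell+1,c']$ iff $c'=c$ or $c'=c(\ell)$, and there are no other edges. For a connected graph $G$ and $X\subseteq V(G)$, two vertices $x,y$ are $X$-visible if some shortest $x,y$-path has no internal vertex in $X$. $X$ is a total mutual-visibility set if every two vertices of $V(G)$ are $X$-visible; $\mu_t(G)$ is the maximum size of a total mutual-visibility set. *)

(* Defs.v *)
From mathcomp Require Import all_boot.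
Set Implicit Arguments. Unset Strict Implicit. Unset Printing Implicit Defensive.

Section Visibility.
Variable (V : finType) (adj : rel V).

(* a walk from x to y, given as the list p of vertices after x (x :: p) *)
Definition walk (x y : V) (p : seq V) : Prop := path adj x p /\ last x p = y.

Definition shortest_path (x y : V) (p : seq V) : Prop :=
  walk x y p /\ forall q, walk x y q -> size p <= size q.

(* internal vertices of the path x :: p (all but its two ends) *)
Definition internal (p : seq V) : seq V := take (size p).-1 p.

Definition X_visible (X : {set V}) (x y : V) : Prop :=
  exists p, shortest_path x y p /\ forall z, z \in internal p -> z \notin X.

Definition total_mutual_visibility_set (X : {set V}) : Prop :=
  forall x y : V, X_visible X x y.

Definition is_mu_t (n : nat) : Prop :=
  (exists X : {set V}, total_mutual_visibility_set X /\ #|X| = n) /\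
  (forall X : {set V}, total_mutual_visibility_set X -> #|X| <= n).
End Visibility.

Definition BFV (d : nat) : finType := ('I_d.+1 * {ffun 'I_d -> bool})%type.

Definition flipbit (d : nat) (c : {ffun 'I_d -> bool}) (l : nat) : {ffun 'I_d -> bool} :=
  [ffun j : 'I_d => if val j == l then ~~ c j else c j].

Definition bf_fwd (d : nat) (u v : BFV d) : bool :=
  (val v.1 == (val u.1).+1) && ((v.2 == u.2) || (v.2 == flipbit u.2 (val u.1))).

Definition bf_adj (d : nat) : rel (BFV d) := fun u v => bf_fwd u v || bf_fwd v u.

(* Main.v *)
Require Import Defs.
From mathcomp Require Import all_boot.
From mathcomp Require Import zify.
From Stdlib Require Import Classical.

Set Implicit Arguments. Unset Strict Implicit. Unset Printing Implicit Defensive.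

Lemma flipbitE d (c : {ffun 'I_d -> bool}) l j :
  flipbit c l j = if val j == l then ~~ c j else c j.
Proof. by rewrite ffunE. Qed.

Lemma flipbitK d (c : {ffun 'I_d -> bool}) l : flipbit (flipbit c l) l = c.
Proof. apply/ffunP => j; rewrite !flipbitE; case: (val j == l) => //; exact: negbK. Qed.

Lemma flip_eq d (c e : {ffun 'I_d -> bool}) l : (c == flipbit e l) = (flipbit c l == e).
Proof. by apply/eqP/eqP => [->|<-]; rewrite flipbitK. Qed.

Lemma flip_inj d (c e : {ffun 'I_d -> bool}) l : (flipbit c l == flipbit e l) = (c == e).
Proof. by apply/eqP/eqP => [H|->] //; rewrite -(flipbitK c l) H flipbitK. Qed.

Lemma adjC d (u w : BFV d) : bf_adj u w = bf_adj w u.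
Proof. by rewrite /bf_adj orbC. Qed.

Lemma adjP d (u w : BFV d) : bf_adj u w ->
  ((w.1 : nat) = (u.1 : nat).+1 /\ (w.2 = u.2 \/ w.2 = flipbit u.2 (u.1 : nat))) \/
  ((u.1 : nat) = (w.1 : nat).+1 /\ (u.2 = w.2 \/ u.2 = flipbit w.2 (w.1 : nat))).
Proof.
rewrite /bf_adj /bf_fwd => /orP [/andP [/eqP h /orP [/eqP e|/eqP e]] | /andP [/eqP h /orP [/eqP e|/eqP e]]];
 [left|left|right|right]; split => //; by [left|right].
Qed.

Lemma adj_up d (u w : BFV d) : (w.1 : nat) = (u.1 : nat).+1 -> w.2 = u.2 -> bf_adj u w.
Proof. move=> h e; rewrite /bf_adj /bf_fwd e eqxx /=; apply/orP; left; rewrite andbT; apply/eqP; exact: h. Qed.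

Lemma adj_upf d (u w : BFV d) : (w.1 : nat) = (u.1 : nat).+1 -> w.2 = flipbit u.2 (u.1 : nat) -> bf_adj u w.
Proof. move=> h e; rewrite /bf_adj /bf_fwd e eqxx orbT /=; apply/orP; left; rewrite andbT; apply/eqP; exact: h. Qed.

Section Main.
Variable n : nat.
Local Notation V := (BFV n.+1).
Local Notation adj := (@bf_adj n.+1).

Lemma fbE (c : {ffun 'I_n.+1 -> bool}) k m : k < n.+1 ->
  flipbit c m (inord k) = if k == m then ~~ c (inord k) else c (inord k).
Proof. by move=> hk; rewrite flipbitE /= inordK. Qed.

Lemma bcontra (b : bool) : b = ~~ b -> False.
Proof. by case: b. Qed.

Definition sig (v : V) : V := (v.1, flipbit v.2 (val v.1).-1).
Lemma sigK : involutive sig.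
Proof. by case=> l c; rewrite /sig /= flipbitK. Qed.

Definition bnd (v : V) := (val v.1 == 0) || (val v.1 == n.+1).

Lemma twin v w : bnd v -> adj v w = adj (sig v) w.
Proof.
case: v => l c; case: w => k e; rewrite /bnd /sig /= => /orP [/eqP h|/eqP h];
  rewrite /bf_adj /bf_fwd /= h /=.
- by rewrite flipbitK [(e == c) || _]orbC.
  have -> : (val k == n.+2) = false by apply/negbTE; change (val k) with (nat_of_ord k); have := ltn_ord k; lia.
  rewrite /=; case E: (n.+1 == (val k).+1) => //=.
  have -> : val k = n by move/eqP: E; change (val k) with (nat_of_ord k); lia.
  by rewrite flip_eq flip_inj orbC.
Qed.

Definition bitv (v : V) := v.2 (inord (val v.1).-1).
Definition X0 : {set V} := [set v | bnd v && bitv v].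

Lemma bitv_sig v : bitv (sig v) = ~~ bitv v.
Proof. rewrite /bitv /sig /= fbE ?eqxx //; case: v => [[l hl] c] /=; lia. Qed.

Definition g (v : V) := if v \in X0 then sig v else v.

Lemma g_notin v : g v \notin X0.
Proof.
rewrite /g; case: ifP => H; last by rewrite H.
move: H; rewrite !inE bitv_sig /bnd /sig /= => /andP [_ ->]; by rewrite andbF.
Qed.

Lemma g_adj a b : adj a b -> adj (g a) b.
Proof. rewrite /g; case: ifP => // H; rewrite -twin //; move: H; rewrite inE => /andP[] //. Qed.

Lemma g_adj' a b : adj a b -> adj a (g b).
Proof. by rewrite adjC => /g_adj; rewrite adjC. Qed.

Lemma path_g y q : forall x x', (forall w, adj x w -> adj x' w) ->
  path adj x (rcons q y) -> path adj x' (rcons (map g q) y).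
Proof.
elim: q => [|a q IH] x x' Hx /=; first by rewrite !andbT; exact: Hx.
move/andP => [Hxa Hp]; apply/andP; split; first exact/g_adj'/Hx.
by apply: (IH a (g a)) Hp => w; exact: g_adj.
Qed.


Lemma flip1_contra (c : {ffun 'I_n.+1 -> bool}) k : k < n.+1 -> c = flipbit c k -> False.
Proof. move=> hk /(congr1 (fun f : {ffun 'I_n.+1 -> bool} => f (inord k))); rewrite fbE // eqxx; exact: bcontra. Qed.

Lemma flip2_contra (c : {ffun 'I_n.+1 -> bool}) k m : k < n.+1 -> k != m -> c = flipbit (flipbit c k) m -> False.
Proof.
move=> hk hkm /(congr1 (fun f : {ffun 'I_n.+1 -> bool} => f (inord k))).
rewrite fbE // (negbTE hkm) fbE // eqxx; exact: bcontra.
Qed.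

Definition R (u w : V) := exists p, walk adj u w p.
Lemma R_refl u : R u u. Proof. by exists [::]. Qed.
Lemma R_step u w : adj u w -> R u w. Proof. by move=> h; exists [:: w]; rewrite /walk /= h. Qed.
Lemma R_trans u v w : R u v -> R v w -> R u w.
Proof.
move=> [p [Hp Hl]] [q [Hq Hm]]; exists (p ++ q); split.
  by rewrite cat_path Hp Hl Hq.
by rewrite last_cat Hl.
Qed.

Lemma R_down k : forall l c, l + k <= n.+1 -> R (inord (l + k), c) (inord l, c).
Proof.
elim: k => [|k IH] l c h; first by rewrite addn0; exact: R_refl.
apply: (@R_trans _ (inord (l + k), c)); last by apply: IH; lia.
apply: R_step; rewrite adjC; apply: adj_up => //=; rewrite !inordK; lia.
Qed.

Definition mix (c c' : {ffun 'I_n.+1 -> bool}) i : {ffun 'I_n.+1 -> bool} :=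
  [ffun j : 'I_n.+1 => if (j : nat) < i then c' j else c j].

Lemma R_up c c' i : i <= n.+1 -> R (inord 0, c) (inord i, mix c c' i).
Proof.
elim: i => [|i IH] hi.
  have -> : mix c c' 0 = c by apply/ffunP => j; rewrite ffunE.
  exact: R_refl.
apply: R_trans (IH (ltnW hi)) _; apply: R_step.
have vj0 : ((inord i : 'I_n.+1) : nat) = i by rewrite inordK.
case E: (c' (inord i) == c (inord i)).
- apply: adj_up => /=; first by rewrite !inordK //; lia.
  apply/ffunP => j; rewrite !ffunE ltnS leq_eqVlt.
  case: (eqVneq (j : nat) i) => [hj|hj] /=.
  + have -> : j = inord i by apply: val_inj; rewrite /= hj vj0.
    by rewrite vj0 ltnn; apply/eqP.
  + done.
- apply: adj_upf => /=; first by rewrite !inordK //; lia.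
  apply/ffunP => j; rewrite !ffunE inordK; last by lia. rewrite ltnS leq_eqVlt.
  case: (eqVneq (j : nat) i) => [hj|hj] /=.
  + have -> : j = inord i by apply: val_inj; rewrite /= hj vj0.
    rewrite vj0 ltnn /=. by move: E; case: (c' _); case: (c _).
  + by rewrite ?(negbTE hj).
Qed.

Lemma R_all x y : R x y.
Proof.
case: x => lx cx; case: y => ly cy.
apply: (@R_trans _ (inord 0, cx)).
  have := @R_down lx 0 cx; rewrite add0n inord_val; apply; have := ltn_ord lx; lia.
apply: (@R_trans _ (inord n.+1, cy)).
  have -> : cy = mix cx cy n.+1 by apply/ffunP => j; rewrite ffunE ltn_ord.
  exact: R_up.
have := @R_down (n.+1 - ly) ly cy; rewrite inord_val.
have -> : ly + (n.+1 - ly) = n.+1 by have := ltn_ord ly; lia.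
apply; have := ltn_ord ly; lia.
Qed.

Lemma sp_exists x y : exists p, shortest_path adj x y p.
Proof.
have [p0 Hp0] := R_all x y.
suff H : forall k p, size p < k -> walk adj x y p -> exists p', shortest_path adj x y p'.
  exact: (H (size p0).+1 p0).
elim=> [|k IH] p hp Hw; first by [].
case: (classic (forall q, walk adj x y q -> size p <= size q)) => Hc.
  by exists p.
have [q Hq] := not_all_ex_not _ _ Hc.
have [Hwq Hs] := imply_to_and _ _ Hq.
apply: (IH q) => //.
have : size q < size p by rewrite ltnNge; apply/negP.
lia.
Qed.

Lemma sp2 x y m p : adj x m -> adj m y -> ~~ adj x y -> x != y ->
  shortest_path adj x y p -> exists a, [/\ p = [:: a; y], adj x a & adj a y].
Proof.
move=> hxm hmy nxy xy [[Hp Hl] Hmin].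
have hw : walk adj x y [:: m; y] by split => //=; rewrite hxm hmy.
have := Hmin _ hw.
case: p Hp Hl {Hmin} => [|a [|b [|c p]]] /= Hp Hl hs.
- by rewrite Hl eqxx in xy.
- by move: Hp; rewrite Hl andbT => h; rewrite h in nxy.
- by exists a; move/and3P: Hp => [h1 h2 _]; rewrite -Hl.
- by [].
Qed.

Lemma X0_tmv : total_mutual_visibility_set adj X0.
Proof.
move=> x y; have [p [[Hp Hl] Hmin]] := sp_exists x y.
case/lastP: p Hp Hl Hmin => [|q z] Hp Hl Hmin.
  exists [::]; split; first by split.
  by move=> z; rewrite /internal.
rewrite last_rcons in Hl; subst z.
exists (rcons (map g q) y); split.
  split; first split.
  - exact: (@path_g y q x x (fun w h => h) Hp).
  - by rewrite last_rcons.
  - move=> r Hr; rewrite size_rcons size_map; have := Hmin r Hr; by rewrite size_rcons.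
move=> z; rewrite /internal size_rcons /= -cats1 take_size_cat ?size_map //.
by move/mapP => [w _ ->]; exact: g_notin.
Qed.



Lemma interior_notX X v : total_mutual_visibility_set adj X -> ~~ bnd v -> v \notin X.
Proof.
move=> HX; case: v => [[l hl] c]; rewrite /bnd /= => hb.
have h0 : 0 < l by lia.
have h1 : l <= n by lia.
have [p [Hsp Hint]] := HX (inord l.-1, c) (inord l.+1, c).
have H1 : adj (inord l.-1, c) (Ordinal hl, c).
  apply: adj_up => //=; rewrite inordK; lia.
have H2 : adj (Ordinal hl, c) (inord l.+1, c).
  apply: adj_up => //=; rewrite inordK; lia.
have H3 : ~~ adj (inord l.-1, c) (inord l.+1, c).
  by apply/negP => /adjP /= [[h _]|[h _]]; move: h; rewrite !inordK; lia.
have H4 : (inord l.-1, c) != (inord l.+1, c) :> V.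
  by apply/eqP => /(congr1 (fun v : V => (v.1 : nat))) /=; rewrite !inordK; lia.
have [a [ep hxa hay]] := sp2 H1 H2 H3 H4 Hsp.
have aX : a \notin X by apply: Hint; rewrite ep /internal /= inE eqxx.
suff ea : a = (Ordinal hl, c) by rewrite -ea.
case: a hxa hay aX {ep} => [[k hk] e] hxa hay aX.
move/adjP: hxa => /= [[hk1 he]|[hk1 he]]; move/adjP: hay => /= [[hk2 he2]|[hk2 he2]];
  rewrite ?inordK in hk1 hk2; try lia.
have ek : k = l by lia.
subst k.
rewrite inordK in he; last by lia.
case: he => he.
  by subst e; congr pair; apply: val_inj.
exfalso; case: he2 => he2.
  apply: (@flip1_contra c l.-1); first by lia.
  by rewrite {1}he2.
apply: (@flip2_contra c l.-1 l); [lia | lia | by rewrite -he {1}he2 ek].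
Qed.

Lemma bnd_pair X v : total_mutual_visibility_set adj X -> v \in X -> bnd v -> sig v \notin X.
Proof.
move=> HX; case: v => [[l hl] c] vX; rewrite /bnd /sig /= => /orP [/eqP h0|/eqP hN].
- subst l.
  have [p [Hsp Hint]] := HX (inord 1, c) (inord 1, flipbit c 0).
  have H1 : adj (inord 1, c) (Ordinal hl, c).
    rewrite adjC; apply: adj_up => //=; rewrite inordK; lia.
  have H2 : adj (Ordinal hl, c) (inord 1, flipbit c 0).
    apply: adj_upf => //=; rewrite inordK; lia.
  have H3 : ~~ adj (inord 1, c) (inord 1, flipbit c 0).
    by apply/negP => /adjP /= [[h _]|[h _]]; move: h; rewrite !inordK; lia.
  have H4 : (inord 1, c) != (inord 1, flipbit c 0) :> V.
    apply/eqP => -[] /(@flip1_contra c 0); apply; lia.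
  have [a [ep hxa hay]] := sp2 H1 H2 H3 H4 Hsp.
  have aX : a \notin X by apply: Hint; rewrite ep /internal /= inE eqxx.
  case: a hxa hay aX {ep} => [[k hk] e] hxa hay aX.
  move/adjP: hxa => /= [[hk1 he]|[hk1 he]].
  + move/adjP: hay => /= [[hk2 _]|[hk2 he2]]; rewrite !inordK in hk1 hk2 he; try lia.
    exfalso.
    have E1 : e (inord 0) = c (inord 0) by case: he => ->; rewrite ?fbE //=.
    have E2 : e (inord 0) = ~~ c (inord 0) by case: he2 => ->; rewrite ?inordK ?fbE //=.
    apply: (@bcontra (c (inord 0))); by rewrite -{1}E1 E2.
  + rewrite inordK in hk1; last by lia.
    have k0 : k = 0 by lia.
    subst k; case: he => he.
    * subst e; have ee : Ordinal hk = Ordinal hl by apply: val_inj.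
      by move: aX; rewrite ee vX.
    * rewrite he /= flipbitK; have ee : Ordinal hk = Ordinal hl by apply: val_inj.
      by rewrite -ee.
- subst l.
  have [p [Hsp Hint]] := HX (inord n, c) (inord n, flipbit c n).
  have H1 : adj (inord n, c) (Ordinal hl, c).
    apply: adj_up => //=; rewrite inordK; lia.
  have H2 : adj (Ordinal hl, c) (inord n, flipbit c n).
    rewrite adjC; apply: adj_upf => /=; rewrite inordK ?flipbitK //; lia.
  have H3 : ~~ adj (inord n, c) (inord n, flipbit c n).
    by apply/negP => /adjP /= [[h _]|[h _]]; move: h; rewrite !inordK; lia.
  have H4 : (inord n, c) != (inord n, flipbit c n) :> V.
    apply/eqP => -[] /(@flip1_contra c n); apply; lia.
  have [a [ep hxa hay]] := sp2 H1 H2 H3 H4 Hsp.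
  have aX : a \notin X by apply: Hint; rewrite ep /internal /= inE eqxx.
  case: a hxa hay aX {ep} => [[k hk] e] hxa hay aX.
  move/adjP: hxa => /= [[hk1 he]|[hk1 he]].
  + rewrite inordK in hk1 he; last by lia.
    have kN : k = n.+1 by lia.
    subst k; case: he => he.
    * subst e; have ee : Ordinal hk = Ordinal hl by apply: val_inj.
      by move: aX; rewrite ee vX.
    * rewrite -he; have ee : Ordinal hk = Ordinal hl by apply: val_inj.
      by rewrite -ee.
  + move/adjP: hay => /= [[hk2 he2]|[hk2 _]]; rewrite !inordK in hk1 hk2; try lia.
    exfalso.
    have nk : (n == k) = false by apply/negbTE; lia.
    have E1 : c (inord n) = e (inord n) by case: he => ->; rewrite ?fbE // ?nk.
    have E2 : ~~ c (inord n) = e (inord n).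
      case: he2 => /(congr1 (fun f : {ffun 'I_n.+1 -> bool} => f (inord n))); rewrite !fbE // eqxx ?nk //.
    apply: (@bcontra (c (inord n))); by rewrite {1}E1 -E2.
Qed.

Definition B : {set V} := [set v | bnd v].

Lemma card_B : #|B| = 2 * 2 ^ n.+1.
Proof.
pose f (bc : bool * {ffun 'I_n.+1 -> bool}) : V := (if bc.1 then ord_max else ord0, bc.2).
have fi : injective f.
  move=> [b c] [b' c'] [] H ->; congr pair; move: H.
  by case: b; case: b' => //= /(congr1 val).
have -> : B = f @: setT.
  apply/setP => v; rewrite inE; apply/idP/imsetP.
  - case: v => [[l hl] c]; rewrite /bnd /= => /orP [/eqP h|/eqP h].
    + by exists (false, c) => //; congr pair; apply: val_inj.
    + by exists (true, c) => //; congr pair; apply: val_inj.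
  - by move=> [[[] c] _ ->]; rewrite /bnd /= ?eqxx ?orbT.
by rewrite card_imset // cardsT card_prod card_bool card_ffun card_bool card_ord.
Qed.

Lemma card_double (A : {set V}) : A :&: sig @: A = set0 -> #|A :|: sig @: A| = 2 * #|A|.
Proof. move=> H; rewrite cardsU H cards0 subn0 card_imset; [lia | exact: (can_inj sigK)]. Qed.

Lemma upper X : total_mutual_visibility_set adj X -> #|X| <= 2 ^ n.+1.
Proof.
move=> HX.
have XB : X \subset B.
  apply/subsetP => v vX; rewrite inE; apply/negPn/negP => hb.
  by move: (interior_notX HX hb); rewrite vX.
have disj : X :&: sig @: X = set0.
  apply/setP => v; rewrite inE in_set0; apply/negP => /andP [vX /imsetP [w wX ev]].
  have bv : bnd v by have := subsetP XB v vX; rewrite inE.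
  by move: (bnd_pair HX vX bv); rewrite ev sigK wX.
have sub : X :|: sig @: X \subset B.
  apply/subsetP => v; rewrite inE => /orP [vX|/imsetP [w wX ->]]; first exact: (subsetP XB).
  by have := subsetP XB w wX; rewrite !inE.
have := subset_leq_card sub; rewrite card_double // card_B; lia.
Qed.

Lemma card_X0 : #|X0| = 2 ^ n.+1.
Proof.
have disj : X0 :&: sig @: X0 = set0.
  apply/setP => v; rewrite inE in_set0; apply/negP => /andP [vX /imsetP [w wX ev]].
  move: vX wX; rewrite ev !inE bitv_sig => /andP [_ h1] /andP [_ h2]; by rewrite h2 in h1.
have eqB : X0 :|: sig @: X0 = B.
  apply/setP => v; rewrite inE [v \in B]inE; apply/idP/idP.
  - case/orP => [|/imsetP [w]]; first by rewrite inE => /andP [].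
    by rewrite inE => /andP [hw _] ->.
  - move=> hb; case hv: (bitv v); first by rewrite inE hb hv.
    apply/orP; right; apply/imsetP; exists (sig v); last by rewrite sigK.
    by rewrite inE bitv_sig hv /= andbT.
have := card_double disj; rewrite eqB card_B; lia.
Qed.

End Main.

Theorem theorem5p6 (d : nat) (hd : 1 <= d) :
  is_mu_t (@bf_adj d) (2 ^ d).
Proof.
case: d hd => [|n] // _.
split; first by exists (X0 n); split; [exact: X0_tmv | exact: card_X0].
exact: upper.
Qed.
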